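(* Let $p$ be a prime and $G_p^{rf}=\mathbb{Z}_{p^{r_1}}\oplus\mathbb{Z}_{p^{r_2}}\oplus\cdots\oplus\mathbb{Z}_{p^{r_k}}$ with $1\le r_1<r_2<\cdots<r_k$. Set $n_i=r_{i+1}-r_i$ for $1\le i\le k-1$. Then the number of orbits of the automorphism group $\mathrm{Aut}(G_p^{rf})$ acting on the elements of $G_p^{rf}$ is $$(r_1+1)(n_1+1)(n_2+1)\cdots(n_{k-1}+1).$$ *)

(* Defs.v *)
From HB Require Import structures.
From mathcomp Require Import all_boot all_order all_algebra all_fingroup all_solvable.
Set Implicit Arguments. Unset Strict Implicit. Unset Printing Implicit Defensive.
Import GRing.Theory.

(* The abelian p-group  Z_{p^{r_0}} (+) ... (+) Z_{p^{r_{k-1}}}  as a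
   finGroupType: dependent finite functions i : 'I_k -> 'Z_(p ^ r i),
   with componentwise addition as the group law. *)
Section PrimaryAbelian.
Variables (p k : nat) (r : nat -> nat).

Definition prim_ab := {dffun forall i : 'I_k, 'Z_(p ^ r i)}.
HB.instance Definition _ := Finite.on prim_ab.

Definition prim_ab_mul (x y : prim_ab) : prim_ab :=
  [ffun i => (x i + y i)%R].
Definition prim_ab_one : prim_ab := [ffun i => 0%R].
Definition prim_ab_inv (x : prim_ab) : prim_ab := [ffun i => (- x i)%R].

Lemma prim_ab_mulA : associative prim_ab_mul.
Proof. by move=> x y z; apply/ffunP=> i; rewrite !ffunE addrA. Qed.
Lemma prim_ab_mul1 : left_id prim_ab_one prim_ab_mul.
Proof. by move=> x; apply/ffunP=> i; rewrite !ffunE add0r. Qed.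
Lemma prim_ab_mulV : left_inverse prim_ab_one prim_ab_inv prim_ab_mul.
Proof. by move=> x; apply/ffunP=> i; rewrite !ffunE addNr. Qed.

HB.instance Definition _ := Finite_isGroup.Build prim_ab
  prim_ab_mulA prim_ab_mul1 prim_ab_mulV.
End PrimaryAbelian.

(* Main.v *)
Require Import Defs.
From HB Require Import structures.
From mathcomp Require Import all_boot all_order all_algebra all_fingroup all_solvable.
Set Implicit Arguments. Unset Strict Implicit. Unset Printing Implicit Defensive.
Import GRing.Theory.
From mathcomp Require Import zify.

Section Z.
Variable N : nat.
Hypothesis hN : 1 < N.
Lemma zvalE (x : 'Z_N) : x = ((val x)%:R)%R.
Proof. by rewrite natr_Zp. Qed.
Lemma znat_eq m n : (((m%:R : 'Z_N) == n%:R)%R) = (m == n %[mod N]).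
Proof. by rewrite -val_eqE /= !val_Zp_nat. Qed.
Lemma znat_eq0 m : (((m%:R : 'Z_N) == 0)%R) = (N %| m).
Proof. by rewrite -[0%R]/(0%:R)%R znat_eq mod0n. Qed.
Lemma zmulrn (x : 'Z_N) n : (x *+ n = (val x * n)%:R)%R.
Proof. by rewrite {1}(zvalE x) -mulrnA. Qed.
Lemma zvalnat n : \val (n%:R : 'Z_N)%R = n %% N.
Proof. exact: val_Zp_nat. Qed.
End Z.
Section S.
Variables (p k : nat) (r : nat -> nat).
Hypothesis hp : prime p.
Hypothesis hr0 : 1 <= r 0.
Hypothesis hr : forall i, i.+1 < k -> r i < r i.+1.
Local Notation G := (prim_ab p k r).

Lemma p_gt1 : 1 < p. Proof. exact: prime_gt1. Qed.

Lemma rle s j : s <= j -> j < k -> r s <= r j.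
Proof.
move=> hsj; elim: j hsj => [|j IH]; first by rewrite leqn0 => /eqP ->.
rewrite leq_eqVlt => /orP [/eqP -> //|hsj] hj.
apply: leq_trans (IH hsj (ltnW hj)) _; exact: ltnW (hr hj).
Qed.

Lemma rlt s j : s < j -> j < k -> r s < r j.
Proof.
move=> hsj hj; case: j hsj hj => // j hsj hj.
exact: leq_ltn_trans (rle (hsj : s <= j) (ltnW hj)) (hr hj).
Qed.

Lemma rpos s : s < k -> 0 < r s.
Proof. move=> hs; exact: leq_trans hr0 (rle (leq0n s) hs). Qed.

Lemma N1 (s : 'I_k) : 1 < p ^ r s.
Proof. by rewrite -(expn0 p) ltn_exp2l ?p_gt1 ?rpos. Qed.

Lemma mulGE (x y : G) : (x * y)%g = [ffun i => (x i + y i)%R].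
Proof. by []. Qed.

Lemma oneGE : (1%g : G) = [ffun i => 0%R].
Proof. by []. Qed.

Lemma expGE (x : G) n : (x ^+ n)%g = [ffun i => (x i *+ n)%R].
Proof.
elim: n => [|n IH]; first by rewrite expg0 oneGE; apply/ffunP => i; rewrite !ffunE.
by rewrite expgS mulGE IH; apply/ffunP => i; rewrite !ffunE mulrS.
Qed.

Definition PP (v : nat -> nat) : G := [ffun s : 'I_k => ((p ^ v s)%:R : 'Z_(p ^ r s))%R].

Local Notation AG := (Aut [set: G]).
Local Notation toG := ([Aut [set: G]]%act).

Lemma mkAut (f : G -> G) (fM : forall x y, f (x * y)%g = (f x * f y)%g)
  (finj : injective f) : exists2 a, a \in AG & forall x, a x = f x.
Proof.
exists (perm finj); last exact: permE.
rewrite inE; apply/andP; split; first by apply/subsetP => ? _; rewrite inE.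
by apply/morphicP => x y _ _; rewrite !permE fM.
Qed.

Lemma toE a x : toG x a = a x.
Proof. by rewrite -(actpermE [Aut [set: G]]) autactK. Qed.

Lemma orbI (f : G -> G) (fM : forall x y, f (x * y)%g = (f x * f y)%g)
  (finj : injective f) x : f x \in orbit toG AG x.
Proof.
have [a Aa ha] := mkAut fM finj; rewrite -ha -toE; exact: mem_orbit.
Qed.

Lemma orbE x y : y \in orbit toG AG x -> exists2 a, a \in AG & y = a x.
Proof. by move/orbitP => [a Aa <-]; exists a; rewrite ?toE. Qed.

Definition Qg (x : G) a b : Prop :=
  exists y z : G, x = (y ^+ (p ^ a) * z)%g /\ (z ^+ (p ^ b))%g = 1%g.
Definition Dv (x : G) a b : Prop :=
  forall s : 'I_k, p ^ minn a (r s - b) %| val (x s).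

Lemma QgAut a x c b : a \in AG -> Qg x c b -> Qg (a x) c b.
Proof.
move=> Aa [y [z [-> hz]]]; exists (a y), (a z).
have aM u v : a (u * v)%g = (a u * a v)%g.
  exact: (morphicP (Aut_morphic Aa)) (in_setT u) (in_setT v).
have a1 : a 1%g = 1%g.
  by have := aM 1%g 1%g; rewrite mulg1 => /(congr1 (mulg (a 1%g)^-1)); rewrite mulVg mulKg.
have hX n u : a (u ^+ n)%g = (a u ^+ n)%g.
  by elim: n => [|n IH]; rewrite ?expg0 ?a1 // !expgS aM IH.
by split; rewrite -?hX ?hz ?a1 // aM hX.
Qed.

Lemma Qg_Dv x a b : Qg x a b -> Dv x a b.
Proof.
move=> [y [z [-> hz]]] s; rewrite mulGE expGE !ffunE.
have hNs := N1 s.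
have hzs : (z s *+ p ^ b)%R = 0%R.
  by move/ffunP/(_ s): hz; rewrite expGE oneGE !ffunE.
rewrite zmulrn // in hzs; move/eqP: hzs; rewrite znat_eq0 // => hzs.
rewrite zmulrn // (zvalE (z s)) -natrD zvalnat //.
have hc : minn a (r s - b) <= r s by rewrite (leq_trans (geq_minr _ _)) ?leq_subr.
rewrite /dvdn (modn_dvdm _ (dvdn_exp2l p hc)) -/(dvdn _ _).
apply: dvdn_add; first by apply: dvdn_mull; apply: dvdn_exp2l; exact: geq_minl.
apply: dvdn_trans (dvdn_exp2l p (geq_minr _ _)) _.
case: (leqP b (r s)) => hb; last first.
  by have /eqP -> : r s - b == 0 by rewrite subn_eq0 ltnW.
rewrite -(@dvdn_pmul2r (p ^ b)) ?expn_gt0 ?prime_gt0 // -expnD subnK //.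
Qed.

Lemma Dv_Qg x a b : Dv x a b -> Qg x a b.
Proof.
move=> hD.
exists [ffun s : 'I_k => (if (a <= r s - b)%N then (val (x s) %/ p ^ a)%:R else 0 : 'Z_(p ^ r s))%R].
exists [ffun s : 'I_k => (if (a <= r s - b)%N then 0 else x s : 'Z_(p ^ r s))%R].
split.
  apply/ffunP => s; rewrite mulGE expGE !ffunE; have := hD s.
  case: ifP => h.
    rewrite (minn_idPl h) => hd; rewrite addr0 -mulrnA divnK //; exact: zvalE.
  by rewrite mul0rn add0r.
apply/ffunP => s; rewrite expGE oneGE !ffunE; have := hD s.
case: ifP => h; first by rewrite mul0rn.
move/negbT: h; rewrite -ltnNge => h; rewrite (minn_idPr (ltnW h)) => hd.
rewrite zmulrn ?N1 //; apply/eqP; rewrite znat_eq0 ?N1 //.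
apply: dvdn_trans (dvdn_mul hd (dvdnn (p ^ b))).
rewrite -expnD; apply: dvdn_exp2l.
lia.
Qed.

Definition closed (v : nat -> nat) :=
  forall j s, j < k -> s < k -> v j <= v s + (r j - r s).
Definition bounded (v : nat -> nat) := forall s, s < k -> v s <= r s.

Lemma dvdn_modX d m n : d %| m -> d %| n -> d %| n %% m.
Proof. by move=> hm hn; rewrite /dvdn (modn_dvdm _ hm). Qed.

Lemma valPP (v : nat -> nat) (s : 'I_k) : val (PP v s) = p ^ v s %% p ^ r s.
Proof. by rewrite ffunE zvalnat ?N1. Qed.

Lemma dvdPP (v : nat -> nat) (s : 'I_k) c : v s <= r s -> c <= v s -> p ^ c %| val (PP v s).
Proof.
move=> hb hc; rewrite valPP; apply: dvdn_modX; apply: dvdn_exp2l => //.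
exact: leq_trans hc hb.
Qed.

Lemma PPdvd (v : nat -> nat) (s : 'I_k) c : v s <= r s -> p ^ c %| val (PP v s) -> c <= r s -> c <= v s.
Proof.
move=> hb; rewrite valPP; case: (ltnP (v s) (r s)) => h.
  by rewrite modn_small ?ltn_exp2l ?p_gt1 // dvdn_Pexp2l ?p_gt1.
by move=> _ hc; apply: leq_trans hc h.
Qed.

Lemma Dv_PP (v : nat -> nat) (j : 'I_k) c : closed v -> bounded v -> c <= v j ->
  Dv (PP v) c (r j - c).
Proof.
move=> hc hb hcj s; apply: dvdPP; first exact: hb.
have := hc j s (ltn_ord j) (ltn_ord s); have := hb j (ltn_ord j).
have := hb s (ltn_ord s); lia.
Qed.

Lemma PP_Dv (v : nat -> nat) (j : 'I_k) c : bounded v -> c <= r j ->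
  Dv (PP v) c (r j - c) -> c <= v j.
Proof.
move=> hb hcj /(_ j); rewrite (_ : minn c (r j - (r j - c)) = c); last by lia.
by move=> h; apply: PPdvd => //; exact: hb.
Qed.

Lemma PP_le v w : closed v -> bounded v -> bounded w ->
  PP w \in orbit toG AG (PP v) -> forall j, j < k -> v j <= w j.
Proof.
move=> hc hb hbw /orbE [a Aa hw] j hj.
have := @PP_Dv w (Ordinal hj) (v j) hbw (hb j hj).
apply; apply: Qg_Dv; rewrite hw; apply: QgAut => //; apply: Dv_Qg.
exact: (@Dv_PP v (Ordinal hj) (v j)).
Qed.

Lemma PP_eq v w : closed v -> bounded v -> closed w -> bounded w ->
  PP w \in orbit toG AG (PP v) -> forall j, j < k -> v j = w j.
Proof.
move=> hcv hbv hcw hbw hin j hj; apply/eqP; rewrite eqn_leq.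
rewrite (PP_le hcv hbv hbw hin) //=.
apply: (PP_le hcw hbw hbv) => //.
by rewrite orbit_in_sym.
Qed.

Definition ext (f : 'I_k -> nat) (n : nat) : nat := odflt 0 (omap f (insub n)).
Lemma extE f (o : 'I_k) : ext f o = f o.
Proof. by rewrite /ext valK. Qed.

Lemma orb_trans x y z : y \in orbit toG AG x -> z \in orbit toG AG y -> z \in orbit toG AG x.
Proof.
move=> hxy hyz; move: hyz hxy; apply: orbit_in_trans; exact: subxx.
Qed.

Lemma unitN (s : 'I_k) m : coprime p m -> ((m%:R : 'Z_(p ^ r s)) \is a GRing.unit)%R.
Proof. by move=> h; rewrite unitZpE ?N1 // coprime_pexpl ?rpos. Qed.

Lemma scale_orb (m : nat -> nat) (x : G) : (forall s, s < k -> coprime p (m s)) ->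
  [ffun s : 'I_k => (((m s)%:R : 'Z_(p ^ r s))^-1 * x s)%R] \in orbit toG AG x.
Proof.
move=> hm; set f := fun y : G => [ffun s : 'I_k => (((m s)%:R : 'Z_(p ^ r s))^-1 * y s)%R].
apply: (orbI (f := f)).
  by move=> y z; rewrite /f !mulGE; apply/ffunP => s; rewrite !ffunE mulrDr.
move=> y z /ffunP hyz; apply/ffunP => s; move: (hyz s); rewrite /f !ffunE.
by apply: mulrI; rewrite unitrV unitN // hm.
Qed.

Lemma xlt (x : G) (s : 'I_k) : val (x s) < p ^ r s.
Proof.
have -> : val (x s) = val (x s) %% p ^ r s by rewrite -zvalnat ?N1 // -zvalE.
by rewrite ltn_pmod // expn_gt0 prime_gt0.
Qed.

Lemma to_PP (x : G) : exists v, bounded v /\ PP v \in orbit toG AG x.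
Proof.
pose v := ext (fun o => if val (x o) == 0 then r o else logn p (val (x o))).
pose m := ext (fun o => if val (x o) == 0 then 1 else val (x o) %/ p ^ logn p (val (x o))).
have hs (o : 'I_k) : 0 < val (x o) -> {u | coprime p u & val (x o) = u * p ^ logn p (val (x o))}.
  by move=> h; apply: pfactor_coprime.
exists v; split.
  move=> s hs'; rewrite -[s]/(val (Ordinal hs')) /v extE; case: eqP => // /eqP h0.
  have h1 := xlt x (Ordinal hs').
  have h2 : p ^ logn p (val (x (Ordinal hs'))) <= val (x (Ordinal hs')) by apply: dvdn_leq; rewrite ?lt0n ?pfactor_dvdnn.
  by apply: ltnW; rewrite -(ltn_exp2l _ _ p_gt1); exact: leq_ltn_trans h2 h1.
have hm : forall s, s < k -> coprime p (m s).
  move=> s hs'; rewrite -[s]/(val (Ordinal hs')) /m extE; case: eqP => h0.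
    exact: coprimen1.
  have [|u hu hxu] := hs (Ordinal hs'); first by rewrite lt0n; apply/eqP.
  by rewrite {1}hxu mulnK ?expn_gt0 ?prime_gt0.
have -> : PP v = [ffun s : 'I_k => (((m s)%:R : 'Z_(p ^ r s))^-1 * x s)%R].
  apply/ffunP => o; rewrite !ffunE /m /v !extE; case: eqP => h0.
    by rewrite [x o]zvalE h0 mulr0; apply/eqP; rewrite znat_eq0 ?N1.
  have [|u hu hxu] := hs o; first by rewrite lt0n; apply/eqP.
  move: hxu; set l := logn p _ => hxu.
  rewrite hxu mulnK ?expn_gt0 ?prime_gt0 // [x o]zvalE hxu natrM mulKr //.
  exact: unitN.
exact: scale_orb.
Qed.

Lemma znat_modd N M n : 1 < N -> N %| M -> (((n %% M)%:R : 'Z_N) = n%:R)%R.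
Proof. by move=> hN hM; apply/eqP; rewrite znat_eq // modn_dvdm. Qed.

Lemma coprime1pX m : 0 < m -> coprime p (1 + p ^ m).
Proof.
move=> hm; rewrite prime_coprime // dvdn_addl ?dvdn1 ?neq_ltn ?p_gt1 ?orbT //.
by rewrite dvdn_exp.
Qed.

Definition upd (v : nat -> nat) j e := fun t => if t == j then e else v t.

Lemma step (v : nat -> nat) j s : bounded v -> j < k -> s < k ->
  v s + (r j - r s) < v j ->
  PP (upd v j (v s + (r j - r s))) \in orbit toG AG (PP v).
Proof.
move=> hb hj hs hlt.
have hbj := hb j hj; have hbs := hb s hs.
have hjs : j != s by apply/eqP => hjs; move: hlt; rewrite hjs subnn addn0 ltnn.
have hvs : v s < r s.
  rewrite ltn_neqAle hbs andbT; apply/eqP => hvs; move: hlt; rewrite hvs.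
  case: (leqP (r s) (r j)) => h; lia.
set d := r j - r s in hlt *; set e := v s + d in hlt *.
pose so := Ordinal hs.
pose T := fun y : G => ([ffun t : 'I_k => if val t == j then (y t + (p ^ d * val (y so))%:R)%R else y t] : G).
have TM : forall y z, T (y * z)%g = (T y * T z)%g.
  move=> y z; apply/ffunP => t; rewrite /T !mulGE !ffunE; case: ifP => // /eqP ht.
  have -> : val (y so + z so)%R = (val (y so) + val (z so)) %% p ^ r s.
    by rewrite {1}(zvalE (y so)) {1}(zvalE (z so)) -natrD zvalnat ?N1.
  rewrite muln_modr znat_modd ?N1 //; last first.
    by rewrite -expnD; apply: dvdn_exp2l; rewrite ht /d; lia.
  by rewrite mulnDr natrD addrACA.
have Tinj : injective T.
  move=> y z /ffunP h; apply/ffunP => t.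
  have hso := h so; rewrite /T !ffunE /= eq_sym (negbTE hjs) in hso.
  have := h t; rewrite /T !ffunE; case: ifP => // _; rewrite hso; exact: addIr.
apply: orb_trans (orbI TM Tinj (PP v)) _.
pose m := fun t => if t == j then 1 + p ^ (v j - e) else 1.
have -> : PP (upd v j e) = [ffun t : 'I_k => (((m t)%:R : 'Z_(p ^ r t))^-1 * T (PP v) t)%R].
  apply/ffunP => t; rewrite /T /m /upd !ffunE; case: eqP => ht; last first.
    by rewrite mulr1n invr1 mul1r.
  have hv : v t = v j by rewrite ht.
  rewrite hv zvalnat ?N1 // modn_small ?ltn_exp2l ?p_gt1 // -expnD /= (addnC d) -/e -natrD.
  have -> : p ^ v j + p ^ e = (1 + p ^ (v j - e)) * p ^ e.
    by rewrite mulnDl mul1n -expnD subnK 1?addnC //; apply: ltnW.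
  rewrite natrM mulKr //; apply: unitN; apply: coprime1pX; by rewrite subn_gt0.
apply: scale_orb => t ht; rewrite /m; case: ifP => _; last exact: coprimen1.
by apply: coprime1pX; rewrite subn_gt0.
Qed.

Definition closedb (v : nat -> nat) :=
  [forall j : 'I_k, forall s : 'I_k, v j <= v s + (r j - r s)].

Lemma closedbP v : closedb v -> closed v.
Proof.
move=> hc j s hj hs.
exact: (forallP (forallP hc (Ordinal hj)) (Ordinal hs)).
Qed.

Lemma nonclosed v : bounded v -> ~~ closedb v -> exists v',
  [/\ bounded v', \sum_(i < k) v' i < \sum_(i < k) v i & PP v' \in orbit toG AG (PP v)].
Proof.
move=> hb /forallPn [j] /forallPn [s]; rewrite -ltnNge => hlt.
exists (upd v j (v s + (r j - r s))); split.
- move=> t ht; rewrite /upd; case: eqP => [->|_]; last exact: hb.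
  by apply: leq_trans (ltnW hlt) (hb j (ltn_ord j)).
- rewrite (bigD1 j) //= [X in _ < X](bigD1 j) //= {1}/upd eqxx.
  rewrite (eq_bigr (fun i : 'I_k => v i)); first by rewrite ltn_add2r.
  by move=> i hij; rewrite /upd val_eqE (negbTE hij).
- exact: step.
Qed.

Lemma reduce n (v : nat -> nat) : \sum_(i < k) v i <= n -> bounded v ->
  exists w, [/\ closed w, bounded w & PP w \in orbit toG AG (PP v)].
Proof.
elim: n v => [|n IH] v hs hb; (case: (boolP (closedb v)) => hc;
  first by exists v; split; [exact: closedbP | exact: hb | exact: orbit_refl]);
  have [v' [hb' hlt hin]] := nonclosed hb hc.
  by move: (leq_trans hlt hs).
have [|w [hw1 hw2 hw3]] := IH v' _ hb'; first by rewrite -ltnS (leq_trans hlt hs).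
by exists w; split => //; exact: orb_trans hin hw3.
Qed.

Lemma to_closed (x : G) : exists w, [/\ closed w, bounded w & PP w \in orbit toG AG x].
Proof.
have [v [hb hin]] := to_PP x.
have [w [h1 h2 h3]] := reduce (leqnn _) hb.
by exists w; split => //; exact: orb_trans hin h3.
Qed.

Definition bnd (i : nat) : nat := (if i == 0 then r 0 else r i - r i.-1).+1.
Local Notation Dm := {dffun forall i : 'I_k, 'I_(bnd i)}.
Definition beta (d : Dm) : nat -> nat := ext (fun o => val (d o)).
Definition Psum (d : Dm) (j : nat) := \sum_(i < j.+1) beta d i.

Lemma beta_lt d (o : 'I_k) : beta d o < bnd o.
Proof. rewrite /beta extE; exact: ltn_ord. Qed.

Lemma beta0 d : 0 < k -> beta d 0 <= r 0.
Proof. by move=> hk; have := beta_lt d (Ordinal hk). Qed.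

Lemma betaS d i : i.+1 < k -> beta d i.+1 <= r i.+1 - r i.
Proof. by move=> hk; have := beta_lt d (Ordinal hk). Qed.

Lemma PsumS d j : Psum d j.+1 = Psum d j + beta d j.+1.
Proof. by rewrite /Psum big_ord_recr. Qed.

Lemma Psum0 d : Psum d 0 = beta d 0.
Proof. by rewrite /Psum big_ord1. Qed.

Lemma Psum_bounded d : bounded (Psum d).
Proof.
elim=> [|s IH] hs; first by rewrite Psum0 beta0.
rewrite PsumS; have := IH (ltnW hs); have := betaS d hs; have := hr hs; lia.
Qed.

Lemma Psum_mono d s j : s <= j -> Psum d s <= Psum d j.
Proof.
elim: j => [|j IH]; first by rewrite leqn0 => /eqP ->.
rewrite leq_eqVlt => /orP [/eqP -> //|hsj].
by rewrite PsumS (leq_trans (IH hsj)) ?leq_addr.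
Qed.

Lemma Psum_diff d s j : s <= j -> j < k -> Psum d j <= Psum d s + (r j - r s).
Proof.
elim: j => [|j IH]; first by rewrite leqn0 => /eqP ->; rewrite subnn addn0.
rewrite leq_eqVlt => /orP [/eqP -> _|hsj hj]; first by rewrite subnn addn0.
rewrite PsumS; have := IH hsj (ltnW hj); have := betaS d hj; have := hr hj.
have := rle (hsj : s <= j) (ltnW hj); lia.
Qed.

Lemma Psum_closed d : closed (Psum d).
Proof.
move=> j s hj hs; case: (leqP s j) => h; first exact: Psum_diff.
by apply: leq_trans (Psum_mono d (ltnW h)) (leq_addr _ _).
Qed.

Lemma Psum_inj d d' : (forall j, j < k -> Psum d j = Psum d' j) -> d = d'.
Proof.
move=> h.
have hb : forall i, i < k -> beta d i = beta d' i.
  case=> [|i] hi; first by rewrite -!Psum0 h.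
  have := h _ hi; have := h _ (ltnW hi); rewrite !PsumS => ->.
  by move/eqP; rewrite eqn_add2l => /eqP.
apply/ffunP => o; apply: val_inj.
by have := hb o (ltn_ord o); rewrite /beta !extE.
Qed.

Lemma Psum_surj w : closed w -> bounded w -> exists d, forall j, j < k -> Psum d j = w j.
Proof.
move=> hc hb.
exists [ffun o : 'I_k => (@inord (if val o == 0 then r 0 else r o - r (val o).-1)
   (if val o == 0 then w 0 else w o - w (val o).-1) : 'I_(bnd o))].
have hbeta : forall i, i < k -> beta [ffun o : 'I_k => (@inord (if val o == 0 then r 0 else r o - r (val o).-1)
   (if val o == 0 then w 0 else w o - w (val o).-1) : 'I_(bnd o))] i =
   (if i == 0 then w 0 else w i - w i.-1).
  move=> i hi; rewrite -[i]/(val (Ordinal hi)) /beta extE ffunE /= inordK //.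
  case: i hi => [|i] hi /=; first by rewrite ltnS hb.
  have := hc _ _ hi (ltnW hi); rewrite ltnS; lia.
elim=> [|j IH] hj; first by rewrite Psum0 hbeta.
rewrite PsumS IH ?(ltnW hj) // hbeta //=.
have := hc _ _ (ltnW hj) hj; have := hr hj; lia.
Qed.

Lemma PP_ext (v w : nat -> nat) : (forall s, s < k -> v s = w s) -> PP v = PP w.
Proof. by move=> h; apply/ffunP => o; rewrite !ffunE h. Qed.

Lemma count_orbits : #|orbit toG AG @: [set: G]| = \prod_(i < k) bnd i.
Proof.
pose Phi := fun d : Dm => orbit toG AG (PP (Psum d)).
have -> : orbit toG AG @: [set: G] = Phi @: [set: Dm].
  apply/setP => X; apply/imsetP/imsetP => [[x _ ->]|[d _ ->]].
    have [w [hc hb hin]] := to_closed x; have [d hd] := Psum_surj hc hb.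
    exists d => //; rewrite /Phi (PP_ext hd).
    apply/(orbit_in_eqP (subxx _)); by rewrite orbit_in_sym.
  by exists (PP (Psum d)).
rewrite card_in_imset; last first.
  move=> d d' _ _ hP; apply: Psum_inj => j hj.
  apply: (PP_eq (Psum_closed d) (Psum_bounded d) (Psum_closed d') (Psum_bounded d')) => //.
  by rewrite -/(Phi d) hP orbit_refl.
rewrite cardsT card_dep_ffun foldrE big_map big_enum /=.
by apply: eq_bigr => i _; rewrite card_ord.
Qed.

End S.

Theorem proposition2 (p k : nat) (r : nat -> nat)
  (hp : prime p) (hk : 0 < k) (hr0 : 1 <= r 0)
  (hr : forall i, i.+1 < k -> r i < r i.+1) :
  #|orbit [Aut [set: prim_ab p k r]]%act (Aut [set: prim_ab p k r])
      @: [set: prim_ab p k r]|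
  = (r 0 + 1) * \prod_(i < k.-1) (r i.+1 - r i + 1).
Proof.
rewrite (count_orbits hp hr0 hr).
case: k hk hr => // k _ _ /=.
rewrite big_ord_recl /bnd /= addn1; congr (_ * _).
by apply: eq_bigr => i _; rewrite addn1.
Qed.
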